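(* Let $k, m \in \mathbb N$ with $k \ge 2$, and let $\phi \colon \mathcal H_{2k}^0 \to M_m$ be a real linear map with $\phi(\mathcal{IH}_{2k}^0) \subset \mathcal U_m$. Let $H \in \mathcal{IH}_{2(k-2)}^0$, $K \in \mathcal H_2\cap\mathcal U_2$, $Z \in \mathcal U_2$, $T \in M_{2(k-1),2}$ and $V \in M_{2(k-1),2(k-2)}$ be such that the block matrix $\begin{bmatrix} V & T\end{bmatrix} \in \mathcal U_{2(k-1)}$. Then $$\left|\phi\!\left(\begin{bmatrix} & TZ \\ Z^\ast T^\ast & \end{bmatrix}\right)\right|^2 = \left|\phi\!\left(TKT^\ast \oplus (-Z^\ast K Z)\right)\right|^2 = I_m - \left|\phi\!\left(VHV^\ast \oplus 0_2\right)\right|^2$$ and $$\operatorname{Re}\!\left(\phi\!\left(TKT^\ast \oplus (-Z^\ast KZ)\right)^\ast\, \phi\!\left(\begin{bmatrix} & TZ \\ Z^\ast T^\ast & \end{bmatrix}\right)\right) = 0_m.$$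
   Context: $M_{p,q}$ is the set of $p\times q$ complex matrices, $M_m = M_{m,m}$, $\mathcal U_n$ the $n\times n$ unitary matrices, $\mathcal H_n$ the $n\times n$ complex hermitian matrices, $\mathcal H_n^0$ the trace-zero ones, $\mathcal{IH}_n^0 = \mathcal H_n^0\cap\mathcal U_n$ (for $n=0$ these are the empty matrices). The block matrix $\begin{bmatrix} & TZ \\ Z^\ast T^\ast & \end{bmatrix}$ is the $2k\times 2k$ matrix with zero diagonal blocks of sizes $2(k-1)$ and $2$. $|A| = (A^\ast A)^{1/2}$, $\operatorname{Re}A = \tfrac12(A+A^\ast)$, $\oplus$ is block-diagonal sum. *)

(* Defs.v *)
From HB Require Import structures.
From mathcomp Require Import all_boot all_order all_algebra.
From mathcomp Require Import reals.
From mathcomp Require Import complex.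
Set Implicit Arguments. Unset Strict Implicit. Unset Printing Implicit Defensive.
Import Order.TTheory GRing.Theory Num.Theory.
Local Open Scope ring_scope.

Section MatrixDefs.
Variable C : numClosedFieldType.

Definition cmx_adj {p q} (A : 'M[C]_(p, q)) : 'M[C]_(q, p) :=
  (map_mx Num.conj A)^T.

Definition cmx_hermitian {n} (A : 'M[C]_n) : Prop := cmx_adj A = A.

(* Stated for a p x q matrix so that
   block matrices whose dimensions are only propositionally equal can be used;
   it forces p = q (rank argument) and for square matrices it is the usual
   notion. *)
Definition cmx_unitary {p q} (A : 'M[C]_(p, q)) : Prop :=
  A *m cmx_adj A = 1%:M /\ cmx_adj A *m A = 1%:M.

Definition cmx_herm0 {n} (A : 'M[C]_n) : Prop := cmx_hermitian A /\ \tr A = 0.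

Definition cmx_iherm0 {n} (A : 'M[C]_n) : Prop := cmx_herm0 A /\ cmx_unitary A.

(* |A|^2 = ((adj(A) A)^{1/2})^2 = adj(A) A *)
Definition cmx_sqabs {p q} (A : 'M[C]_(p, q)) : 'M[C]_q := cmx_adj A *m A.

Definition cmx_Re {n} (A : 'M[C]_n) : 'M[C]_n := 2^-1 *: (A + cmx_adj A).

Definition cmx_real_linear_on_herm0 {n m} (phi : 'M[C]_n -> 'M[C]_m) : Prop :=
  forall (a b : C) (X Y : 'M[C]_n), a \is Num.real -> b \is Num.real ->
    cmx_herm0 X -> cmx_herm0 Y -> phi (a *: X + b *: Y) = a *: phi X + b *: phi Y.

End MatrixDefs.

(* Main.v *)
Require Import Defs.
From HB Require Import structures.
From mathcomp Require Import all_boot all_order all_algebra.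
From mathcomp Require Import reals.
From mathcomp Require Import complex.
From mathcomp Require Import ring lra.
Import Order.TTheory GRing.Theory Num.Theory.
Local Open Scope ring_scope.


Section Adj.
Variable C : numClosedFieldType.
Local Notation adj := (@cmx_adj C _ _).

Lemma cadjM p q r (A : 'M[C]_(p,q)) (B : 'M[C]_(q,r)) : adj (A *m B) = adj B *m adj A.
Proof. by rewrite /cmx_adj map_mxM trmx_mul. Qed.
Lemma cadjD p q (A B : 'M[C]_(p,q)) : adj (A + B) = adj A + adj B.
Proof. by rewrite /cmx_adj map_mxD linearD. Qed.
Lemma cadjN p q (A : 'M[C]_(p,q)) : adj (- A) = - adj A.
Proof. by rewrite /cmx_adj map_mxN linearN. Qed.
Lemma cadjZ p q (a : C) (A : 'M[C]_(p,q)) : a \is Num.real -> adj (a *: A) = a *: adj A.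
Proof. by move=> ha; rewrite /cmx_adj map_mxZ linearZ /= conj_Creal. Qed.
Lemma cadj0 p q : adj (0 : 'M[C]_(p,q)) = 0.
Proof. by rewrite /cmx_adj map_mx0 trmx0. Qed.
Lemma cadjK p q (A : 'M[C]_(p,q)) : adj (adj A) = A.
Proof. by apply/matrixP=> i j; rewrite /cmx_adj !mxE conjCK. Qed.
Lemma cadj_row p q r (A : 'M[C]_(p,q)) (B : 'M[C]_(p,r)) :
  adj (row_mx A B) = col_mx (adj A) (adj B).
Proof. by rewrite /cmx_adj map_row_mx tr_row_mx. Qed.
Lemma cadj_block p1 p2 q1 q2 (A : 'M[C]_(p1,q1)) (B : 'M[C]_(p1,q2))
  (D : 'M[C]_(p2,q1)) (E : 'M[C]_(p2,q2)) :
  adj (block_mx A B D E) = block_mx (adj A) (adj D) (adj B) (adj E).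
Proof. by rewrite /cmx_adj map_block_mx tr_block_mx. Qed.
End Adj.


Section Key.
Variable C : numClosedFieldType.
Variable m : nat.
Local Notation adj := (@cmx_adj C _ _).
Local Notation sq := (@cmx_sqabs C m m).
Definition Cr (x y : 'M[C]_m) := adj x *m y + adj y *m x.

Lemma sqD x y : sq (x + y) = sq x + Cr x y + sq y.
Proof.
rewrite /cmx_sqabs /Cr cadjD mulmxDl !mulmxDr.
by rewrite !addrA; congr (_ + _); rewrite -!addrA; congr (_ + _); rewrite addrC.
Qed.
Lemma sqZ a x : a \is Num.real -> sq (a *: x) = a ^+ 2 *: sq x.
Proof. by move=> ha; rewrite /cmx_sqabs cadjZ // -scalemxAl -scalemxAr scalerA. Qed.
Lemma sqN x : sq (- x) = sq x.
Proof. by rewrite /cmx_sqabs cadjN mulNmx mulmxN opprK. Qed.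
Lemma CrDr x y z : Cr x (y + z) = Cr x y + Cr x z.
Proof.
rewrite /Cr cadjD mulmxDl mulmxDr.
by rewrite !addrA; congr (_ + _); rewrite -!addrA; congr (_ + _); rewrite addrC.
Qed.
Lemma CrZr a x y : a \is Num.real -> Cr x (a *: y) = a *: Cr x y.
Proof. by move=> ha; rewrite /Cr cadjZ // -scalemxAl -scalemxAr scalerDr. Qed.
Lemma CrZl a x y : a \is Num.real -> Cr (a *: x) y = a *: Cr x y.
Proof. by move=> ha; rewrite /Cr cadjZ // -scalemxAl -scalemxAr scalerDr addrC. Qed.
Lemma CrNr x y : Cr x (- y) = - Cr x y.
Proof. by rewrite /Cr cadjN mulNmx mulmxN opprD. Qed.

Lemma two_half (x y z : 'M[C]_m) : x + y + z = 1%:M -> x + - y + z = 1%:M ->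
  y = 0 /\ x + z = 1%:M.
Proof.
move=> h1 h2.
have h3 : (x + y + z) - (x + - y + z) = y *+ 2.
  rewrite [x + y + z]addrAC [x + - y + z]addrAC opprD addrA [x + z + y]addrC addrK.
  by rewrite opprK mulr2n.
rewrite h1 h2 subrr in h3.
have hy : y = 0.
  have : (2%:R : C) *: y = 0 by rewrite scaler_nat -h3.
  move/(congr1 (fun v => (2%:R : C)^-1 *: v)); rewrite scalerA mulVf ?pnatr_eq0 //.
  by rewrite scale1r scaler0.
by split=> //; rewrite -h1 hy addr0.
Qed.

Lemma key (s0 t0 : C) (e d b : 'M[C]_m) :
  s0 \is Num.real -> t0 \is Num.real -> s0 ^+ 2 + t0 ^+ 2 = 1 -> s0 * t0 != 0 ->
  (forall s t : C, s \is Num.real -> t \is Num.real -> s ^+ 2 + t ^+ 2 = 1 ->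
     sq (e + (s *: d + t *: b)) = 1%:M) ->
  [/\ sq b = sq d, sq d = 1%:M - sq e & Cr d b = 0].
Proof.
move=> rs rt hst st0 h.
have r1 : (1 : C) \is Num.real by [].
have r0 : (0 : C) \is Num.real by [].
have rN1 : (-1 : C) \is Num.real by rewrite realN.
have h10 := h 1 0 r1 r0 ltac:(by rewrite expr1n expr0n addr0).
have hN10 := h (-1) 0 rN1 r0 ltac:(by rewrite sqrrN expr1n expr0n addr0).
have h01 := h 0 1 r0 r1 ltac:(by rewrite expr1n expr0n add0r).
have h0N1 := h 0 (-1) r0 rN1 ltac:(by rewrite sqrrN expr1n expr0n add0r).
rewrite scale1r !scale0r addr0 sqD in h10.
rewrite scaleN1r !scale0r addr0 sqD CrNr sqN in hN10.
rewrite scale1r !scale0r add0r sqD in h01.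
rewrite scaleN1r !scale0r add0r sqD CrNr sqN in h0N1.
have [ed edd] := two_half _ _ _ h10 hN10.
have [eb ebb] := two_half _ _ _ h01 h0N1.
have hd : sq d = 1%:M - sq e by rewrite -edd addrC addKr.
have hb : sq b = 1%:M - sq e by rewrite -ebb addrC addKr.
split; first by rewrite hd hb.
  by [].
have := h s0 t0 rs rt hst.
rewrite sqD CrDr !CrZr // ed eb !scaler0 addr0 sqD !sqZ // CrZl // CrZr // hd hb.
rewrite scalerA -addrA [_ *: (1%:M - _) + _]addrC -addrA -scalerDl hst scale1r.
rewrite add0r addrCA [sq e + _]addrC subrK -{2}[1%:M]add0r => /addIr.
move/(congr1 (fun v => (s0 * t0)^-1 *: v)); rewrite scalerA mulVf //.
by rewrite scale1r scaler0.
Qed.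
End Key.


Section Blocks.
Variable C : numClosedFieldType.
Variables n1 p : nat.
Local Notation adj := (@cmx_adj C _ _).
Variables (H : 'M[C]_p) (K Z : 'M[C]_2) (T : 'M[C]_(n1, 2)) (V : 'M[C]_(n1, p)).
Hypotheses (hH : cmx_iherm0 H) (hK : cmx_hermitian K /\ cmx_unitary K) (hZ : cmx_unitary Z)
  (hVT : cmx_unitary (row_mx V T)).

Let B : 'M[C]_(n1 + 2) := block_mx 0 (T *m Z) (adj Z *m adj T) 0.
Let D : 'M[C]_(n1 + 2) := block_mx (T *m K *m adj T) 0 0 (- (adj Z *m K *m Z)).
Let E : 'M[C]_(n1 + 2) := block_mx (V *m H *m adj V) 0 0 (0 : 'M[C]_2).

Lemma facts : [/\ adj V *m V = 1%:M, adj V *m T = 0, adj T *m V = 0, adj T *m T = 1%:M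
  & V *m adj V + T *m adj T = 1%:M].
Proof.
case: hVT; rewrite cadj_row mul_row_col mul_col_row => h1 h2.
move: h2; rewrite (scalar_mx_block p 2) => /eq_block_mx [a b c d].
by split.
Qed.

Lemma herm_facts : [/\ adj H = H, adj K = K, H *m H = 1%:M, K *m K = 1%:M &
  (Z *m adj Z = 1%:M /\ adj Z *m Z = 1%:M)].
Proof.
case: hH => [[hh _] [hu _]]; case: hK => hk [ku _]; case: hZ => z1 z2.
by split=> //; [rewrite -{2}hh | rewrite -{2}hk].
Qed.

Lemma Xprops (s t : C) : s \is Num.real -> t \is Num.real -> s ^+ 2 + t ^+ 2 = 1 ->
  let X := E + (s *: D + t *: B) in
  [/\ adj X = X, \tr X = 0 & X *m X = 1%:M].
Proof.
move=> rs rt hst X.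
have [VV VT TV TT VVTT] := facts.
have [aH aK HH KK [ZZ ZZ']] := herm_facts.
have mx (q r u : nat) (M1 : 'M[C]_(q, r)) (M2 : 'M[C]_(r, q)) (N : 'M[C]_(q,u)) :
   M1 *m M2 = 1%:M -> M1 *m (M2 *m N) = N by move=> hM; rewrite mulmxA hM mul1mx.
have mx0 (q r w u : nat) (M1 : 'M[C]_(q, r)) (M2 : 'M[C]_(r, w)) (N : 'M[C]_(w,u)) :
   M1 *m M2 = 0 -> M1 *m (M2 *m N) = 0 by move=> hM; rewrite mulmxA hM mul0mx.
have VVx := mx _ _ _ _ _ ^~ VV. have TTx := mx _ _ _ _ _ ^~ TT.
have HHx := mx _ _ _ _ _ ^~ HH. have KKx := mx _ _ _ _ _ ^~ KK.
have ZZx := mx _ _ _ _ _ ^~ ZZ. have ZZx' := mx _ _ _ _ _ ^~ ZZ'.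
have VTx := mx0 _ _ _ _ _ _ ^~ VT. have TVx := mx0 _ _ _ _ _ _ ^~ TV.
have eX : X = block_mx (V *m H *m adj V + s *: (T *m K *m adj T)) (t *: (T *m Z))
    (t *: (adj Z *m adj T)) (- (s *: (adj Z *m K *m Z))).
  by rewrite /X /E /D /B !scale_block_mx !add_block_mx !scaler0 !addr0 !add0r scalerN.
rewrite eX; split.
- rewrite cadj_block !cadjD !cadjN !cadjZ // !cadjM !cadjK aH aK !mulmxA.
  done.
- rewrite mxtrace_block mxtraceD raddfN /= !mxtraceZ -!mulmxA.
  rewrite (mxtrace_mulC V) (mxtrace_mulC T) (mxtrace_mulC (adj Z)) -!mulmxA VV TT ZZ !mulmx1.
  by case: hH => [[_ ->] _]; rewrite add0r subrr.
rewrite mulmx_block (scalar_mx_block n1 2).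
rewrite !mulmxDl !mulmxDr !mulmxN !mulNmx -!scalemxAl -!scalemxAr !scalerA -!mulmxA.
rewrite ?VVx ?TTx ?HHx ?KKx ?ZZx ?ZZx' ?VTx ?TVx ?mulmx0 ?mul0mx ?scaler0 ?add0r ?addr0 ?oppr0.
rewrite (mulmxA K K Z) KK mul1mx ZZ' opprK (mulrC t s) !subrr -addrA -scalerDl -!expr2 hst scale1r VVTT.
by rewrite -scalerDl addrC hst scale1r.
Qed.

Lemma herm0E : cmx_herm0 E.
Proof.
have [VV VT TV TT VVTT] := facts.
split; first by rewrite /cmx_hermitian /E cadj_block !cadj0 !cadjM cadjK -mulmxA; case: hH => [[-> _] _].
rewrite /E mxtrace_block mxtrace0 addr0 (mxtrace_mulC (V *m H)) mulmxA VV mul1mx.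
by case: hH => [[_ ->] _].
Qed.
Lemma herm0D : cmx_herm0 D.
Proof.
have [VV VT TV TT VVTT] := facts.
have [aH aK HH KK [ZZ ZZ']] := herm_facts.
split; first by rewrite /cmx_hermitian /D cadj_block !cadj0 cadjN !cadjM !cadjK aK !mulmxA.
rewrite /D mxtrace_block raddfN /= -!mulmxA (mxtrace_mulC T) (mxtrace_mulC (adj Z)) -!mulmxA TT ZZ !mulmx1.
by rewrite subrr.
Qed.
Lemma herm0B : cmx_herm0 B.
Proof.
split; first by rewrite /cmx_hermitian /B cadj_block !cadj0 !cadjM !cadjK.
by rewrite /B mxtrace_block !mxtrace0 addr0.
Qed.
End Blocks.

Lemma herm0_lin (C : numClosedFieldType) n (a b : C) (X Y : 'M[C]_n) :
  a \is Num.real -> b \is Num.real -> cmx_herm0 X -> cmx_herm0 Y -> cmx_herm0 (a *: X + b *: Y).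
Proof.
move=> ra rb [hX tX] [hY tY]; split.
  by rewrite /cmx_hermitian cadjD !cadjZ // hX hY.
by rewrite mxtraceD !mxtraceZ tX tY !mulr0 addr0.
Qed.

Theorem lemma3p9 (R : realType) (k m : nat) (hk : (2 <= k)%N)
  (phi : 'M[R[i]]_(2 * (k - 1) + 2) -> 'M[R[i]]_m)
  (phi_lin : cmx_real_linear_on_herm0 phi)
  (phi_unit : forall X : 'M[R[i]]_(2 * (k - 1) + 2), cmx_iherm0 X -> cmx_unitary (phi X))
  (H : 'M[R[i]]_(2 * (k - 2))) (K : 'M[R[i]]_2) (Z : 'M[R[i]]_2)
  (T : 'M[R[i]]_(2 * (k - 1), 2)) (V : 'M[R[i]]_(2 * (k - 1), 2 * (k - 2)))
  (hH : cmx_iherm0 H) (hK : cmx_hermitian K /\ cmx_unitary K) (hZ : cmx_unitary Z)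
  (hVT : cmx_unitary (row_mx V T)) :
  let B : 'M[R[i]]_(2 * (k - 1) + 2) :=
    block_mx 0 (T *m Z) (cmx_adj Z *m cmx_adj T) 0 in
  let D : 'M[R[i]]_(2 * (k - 1) + 2) :=
    block_mx (T *m K *m cmx_adj T) 0 0 (- (cmx_adj Z *m K *m Z)) in
  let E : 'M[R[i]]_(2 * (k - 1) + 2) :=
    block_mx (V *m H *m cmx_adj V) 0 0 (0 : 'M[R[i]]_2) in
  [/\ cmx_sqabs (phi B) = cmx_sqabs (phi D),
      cmx_sqabs (phi D) = 1%:M - cmx_sqabs (phi E)
    & cmx_Re (cmx_adj (phi D) *m phi B) = 0].
Proof.
move=> B D E.
have hE : cmx_herm0 E := @herm0E _ _ _ H T V hH hVT.
have hD : cmx_herm0 D := @herm0D _ _ _ H K Z T V hH hK hZ hVT.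
have hB : cmx_herm0 B := herm0B _ _ Z T.
have hkey : forall s t : R[i], s \is Num.real -> t \is Num.real -> s ^+ 2 + t ^+ 2 = 1 ->
    cmx_sqabs (phi E + (s *: phi D + t *: phi B)) = 1%:M.
  move=> s t rs rt hst.
  have [hX tX XX] := Xprops _ _ _ H K Z T V hH hK hZ hVT s t rs rt hst.
  have hl : cmx_herm0 (s *: D + t *: B) := herm0_lin _ _ s t D B rs rt hD hB.
  have := phi_lin 1 1 E (s *: D + t *: B) (rpred1 _) (rpred1 _) hE hl.
  rewrite !scale1r (phi_lin s t D B rs rt hD hB) => <-.
  rewrite /cmx_sqabs; have [_ ->] := phi_unit (E + (s *: D + t *: B)) (conj (conj hX tX) (conj (etrans (congr1 _ hX) XX) (etrans (congr1 (fun M => M *m _) hX) XX))).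
  done.
have r35 : (3 / 5 : R[i]) \is Num.real by rewrite rpred_div ?rpred_nat.
have r45 : (4 / 5 : R[i]) \is Num.real by rewrite rpred_div ?rpred_nat.
have h1 : (3 / 5 : R[i]) ^+ 2 + (4 / 5) ^+ 2 = 1.
  by field.
have h2 : (3 / 5 : R[i]) * (4 / 5) != 0.
  by rewrite !mulf_neq0 ?invr_eq0 ?pnatr_eq0.
have [k1 k2 k3] := key _ _ _ _ _ _ _ r35 r45 h1 h2 hkey.
split => //.
by rewrite /cmx_Re cadjM cadjK; move: k3; rewrite /Cr => ->; rewrite scaler0.
Qed.
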